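(* Let $n_i,m_i$ be positive integers and let $A_i\in\mathbb{R}^{n_i\times n_i}$, $B_i\in\mathbb{R}^{n_i\times m_i}$, $F_i\in\mathbb{R}^{n_i\times m_i}$, $C_i\in\mathbb{R}^{m_i\times n_i}$. Consider the discrete-time subsystem with state $x_i\in\mathbb{R}^{n_i}$, control input $u_i\in\mathbb{R}^{m_i}$ and exogenous (coupling) input $v_i\in\mathbb{R}^{m_i}$, $$x_i^+=A_ix_i+B_iu_i+F_iv_i,\qquad y_i=C_ix_i,$$ together with the virtual output $z_i=y_i+D_iv_i=C_ix_i+D_iv_i$, where $D_i\in\mathbb{R}^{m_i\times m_i}$. Suppose there exist matrices $S_i\in\mathbb{R}^{m_i\times m_i}$, $G_i\in\mathbb{R}^{m_i\times n_i}$ and symmetric positive definite matrices $E_i\in\mathbb{R}^{n_i\times n_i}$, $H_i\in\mathbb{R}^{n_i\times n_i}$ such that $$\begin{bmatrix} E_i & \tfrac12 E_iC_i^\top & (A_iE_i+B_iG_i)^\top & E_i\\ \tfrac12 C_iE_i & \tfrac12 S_i+\tfrac12 S_i^\top & F_i^\top & 0\\ A_iE_i+B_iG_i & F_i & E_i & 0\\ E_i & 0 & 0 & H_i \end{bmatrix}\succeq 0 .$$ Then, with $K_i=G_iE_i^{-1}$ and $D_i=S_i$, the closed-loop subsystem under the control law $u_i=K_ix_i$, i.e. $x_i^+=(A_i+B_iK_i)x_i+F_iv_i$, $z_i=C_ix_i+D_iv_i$, is strictly passive with respect to the input-output pair $(v_i,z_i)$; specifically, with $P_i=E_i^{-1}$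 and $\Gamma_i=H_i^{-1}$ (both positive definite), for all $x_i\in\mathbb{R}^{n_i}$ and $v_i\in\mathbb{R}^{m_i}$, $$(x_i^+)^\top P_ix_i^+-x_i^\top P_ix_i\le v_i^\top z_i-x_i^\top\Gamma_ix_i .$$
   Context: A discrete-time system $x^+=f(x,v)$ with output $z=h(x,v)$ is called strictly passive with respect to the input-output pair $(v,z)$ if there exist a continuous storage function $V:\mathbb{R}^n\to\mathbb{R}_{\ge0}$ with $V(0)=0$ and a dissipation rate $\gamma:\mathbb{R}^n\to\mathbb{R}_{\ge 0}$ with $\gamma(0)=0$ and $\gamma(x)>0$ for $x\neq0$, such that $V(x^+)-V(x)\le z^\top v-\gamma(x)$ for all $x$ and $v$. The notation $M\succeq0$ means the symmetric matrix $M$ is positive semidefinite. *)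

(* Defs.v *)
From HB Require Import structures.
From mathcomp Require Import all_boot all_order all_algebra.
Set Implicit Arguments. Unset Strict Implicit. Unset Printing Implicit Defensive.
Import Order.TTheory GRing.Theory Num.Theory.
Local Open Scope ring_scope.

Definition qform {R : numDomainType} {k : nat} (M : 'M[R]_k) (x : 'cV[R]_k) : R :=
  (x^T *m M *m x) 0 0.

Definition psd {R : numDomainType} {k : nat} (M : 'M[R]_k) : Prop :=
  M^T = M /\ forall x : 'cV[R]_k, 0 <= qform M x.

Definition pd {R : numDomainType} {k : nat} (M : 'M[R]_k) : Prop :=
  M^T = M /\ forall x : 'cV[R]_k, x != 0 -> 0 < qform M x.

Definition lmi_mx {R : numFieldType} {n m : nat}
  (A : 'M[R]_n) (B F : 'M[R]_(n, m)) (C : 'M[R]_(m, n))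
  (S : 'M[R]_m) (G : 'M[R]_(m, n)) (E H : 'M[R]_n) : 'M[R]_(n + m + n + n) :=
  let Acl := A *m E + B *m G in
  block_mx
    (block_mx
       (block_mx E ((2%:R)^-1 *: (E *m C^T))
                 ((2%:R)^-1 *: (C *m E)) ((2%:R)^-1 *: S + (2%:R)^-1 *: S^T))
       (col_mx Acl^T F^T)
       (row_mx Acl F) E)
    (col_mx (col_mx E 0) 0)
    (row_mx (row_mx E 0) 0)
    H.

(* Main.v *)
Set Warnings "-notation-overridden,-ambiguous-paths".
Require Import Defs.
From HB Require Import structures.
From mathcomp Require Import all_boot all_order all_algebra.
From mathcomp Require Import lra.
Import Order.TTheory GRing.Theory Num.Theory.
Local Open Scope ring_scope.

Set Implicit Arguments.
Section Aux.
Variable R : realFieldType.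

Definition bf {p q : nat} (u : 'cV[R]_p) (M : 'M[R]_(p, q)) (v : 'cV[R]_q) : R :=
  (u^T *m M *m v) 0 0.

Lemma addE p q (X Y : 'M[R]_(p, q)) i j : (X + Y) i j = X i j + Y i j.
Proof. by rewrite mxE. Qed.

Lemma bf_colcol p1 p2 q (u1 : 'cV_p1) (u2 : 'cV_p2) (M1 : 'M_(p1, q)) (M2 : 'M_(p2,q)) v :
  bf (col_mx u1 u2) (col_mx M1 M2) v = bf u1 M1 v + bf u2 M2 v.
Proof. by rewrite /bf tr_col_mx mul_row_col mulmxDl addE. Qed.

Lemma bf_rowcol p q1 q2 (u : 'cV_p) (M1 : 'M_(p, q1)) (M2 : 'M_(p,q2)) v1 v2 :
  bf u (row_mx M1 M2) (col_mx v1 v2) = bf u M1 v1 + bf u M2 v2.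
Proof. by rewrite /bf mul_mx_row mul_row_col addE. Qed.

Lemma bf_block p1 p2 q1 q2 (u1 : 'cV_p1) (u2 : 'cV_p2) (v1 : 'cV_q1) (v2 : 'cV_q2)
  M11 M12 M21 M22 :
  bf (col_mx u1 u2) (block_mx M11 M12 M21 M22) (col_mx v1 v2) =
  bf u1 M11 v1 + bf u1 M12 v2 + bf u2 M21 v1 + bf u2 M22 v2.
Proof.
rewrite /bf tr_col_mx mul_row_block mul_row_col !mulmxDl !addE.
by rewrite -!addrA; congr (_ + _); rewrite addrC -!addrA; congr (_ + _); rewrite addrC.
Qed.

Lemma bf0 p q (u : 'cV_p) (v : 'cV_q) : bf u 0 v = 0.
Proof. by rewrite /bf mulmx0 mul0mx mxE. Qed.

Lemma bf_tr p q (u : 'cV_p) (M : 'M_(p,q)) v : bf u M v = bf v M^T u.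
Proof.
rewrite /bf -[in LHS](trmxK (u^T *m M *m v)) mxE.
by rewrite !trmx_mul trmxK mulmxA.
Qed.

Lemma bfZ p q (u : 'cV_p) (M : 'M_(p,q)) v k : bf u (k *: M) v = k * bf u M v.
Proof. by rewrite /bf -scalemxAr -scalemxAl mxE. Qed.

Lemma bfD p q (u : 'cV_p) (M N : 'M_(p,q)) v : bf u (M + N) v = bf u M v + bf u N v.
Proof. by rewrite /bf mulmxDr mulmxDl addE. Qed.

Lemma bfDr p q (u : 'cV_p) (M : 'M_(p,q)) v w : bf u M (v + w) = bf u M v + bf u M w.
Proof. by rewrite /bf mulmxDr addE. Qed.

Lemma bfNl p q (u : 'cV_p) (M : 'M_(p,q)) v : bf (- u) M v = - bf u M v.
Proof. by rewrite /bf linearN /= !mulNmx mxE. Qed.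

Lemma bfNr p q (u : 'cV_p) (M : 'M_(p,q)) v : bf u M (- v) = - bf u M v.
Proof. by rewrite /bf mulmxN mxE. Qed.

Lemma bf_mull p p' q (X : 'M_(p, p')) (u : 'cV_p') (M : 'M_(p,q)) v :
  bf (X *m u) M v = bf u (X^T *m M) v.
Proof. by rewrite /bf trmx_mul !mulmxA. Qed.

Lemma bf_mulr p q q' (X : 'M_(q, q')) (u : 'cV_p) (M : 'M_(p,q)) v :
  bf u M (X *m v) = bf u (M *m X) v.
Proof. by rewrite /bf !mulmxA. Qed.

Lemma pd_unit k (E : 'M[R]_k) : pd E -> E \in unitmx.
Proof.
case=> _ hE; rewrite unitmxE unitfE; apply/negP => /det0P [w w0 wE].
have : w^T != 0 by apply: contra w0 => /eqP h; rewrite -(trmxK w) h trmx0.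
move/hE; rewrite /qform trmxK wE mul0mx mxE; by rewrite ltxx.
Qed.

Lemma pd_inv k (E : 'M[R]_k) : pd E -> pd (invmx E).
Proof.
move=> hE; have uE := pd_unit hE; case: hE => sE hE; split.
  by rewrite trmx_inv sE.
move=> y y0; set x := invmx E *m y.
have yx : y = E *m x by rewrite /x mulmxA mulmxV // mul1mx.
clearbody x.
have x0 : x != 0 by apply: contra y0 => /eqP h; rewrite yx h mulmx0.
have := hE x x0; rewrite /qform yx trmx_mul sE.
by rewrite !mulmxA -(mulmxA (x^T *m E)) mulVmx // mulmx1.
Qed.

Lemma qformE k (M : 'M[R]_k) w : qform M w = bf w M w.
Proof. by []. Qed.

End Aux.
Arguments bf {R p q}.
Theorem lemma1 (R : realFieldType) (n m : nat) (hn : (0 < n)%N) (hm : (0 < m)%N)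
  (A : 'M[R]_n) (B F : 'M[R]_(n, m)) (C : 'M[R]_(m, n))
  (S : 'M[R]_m) (G : 'M[R]_(m, n)) (E H : 'M[R]_n) :
  pd E -> pd H -> psd (lmi_mx A B F C S G E H) ->
  let K := G *m invmx E in
  let D := S in
  let P := invmx E in
  let Gamma := invmx H in
  pd P /\ pd Gamma /\
  forall (x : 'cV[R]_n) (v : 'cV[R]_m),
    let xp := (A + B *m K) *m x + F *m v in
    let z := C *m x + D *m v in
    qform P xp - qform P x <= (v^T *m z) 0 0 - qform Gamma x.
Proof.
move=> hE hH [_ hM] K D P Gamma.
have uE := pd_unit hE; have uH := pd_unit hH.
have pP : pd P by exact: pd_inv.
have pG : pd Gamma by exact: pd_inv.
split; first exact: pP. split; first exact: pG.
move=> x v; cbv zeta.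
set xp := (A + B *m K) *m x + F *m v.
have sP := pP.1; have sG := pG.1; have sE := hE.1; have sH := hH.1.
have := hM (col_mx (col_mx (col_mx (P *m x) v) (- (P *m xp))) (- (Gamma *m x))).
set Ak := A + B *m K.
have hPE : P *m E = 1%:M by exact: mulVmx.
have hEP : E *m P = 1%:M by exact: mulmxV.
have hGH : Gamma *m H = 1%:M by exact: mulVmx.
have hHG : H *m Gamma = 1%:M by exact: mulmxV.
have hAcl : (A *m E + B *m G) *m P = Ak.
  by rewrite mulmxDl -!mulmxA hEP mulmx1.
have h1 : bf (P *m x) E (P *m x) = bf x P x.
  by rewrite bf_mull bf_mulr sP hPE mul1mx.
have h2 : bf (P *m x) (2^-1 *: (E *m C^T)) v = 2^-1 * bf v C x.
  by rewrite bfZ bf_mull sP mulmxA hPE mul1mx bf_tr trmxK.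
have h3 : bf v (2^-1 *: (C *m E)) (P *m x) = 2^-1 * bf v C x.
  by rewrite bfZ bf_mulr -mulmxA hEP mulmx1.
have h4 : bf v (2^-1 *: S + 2^-1 *: S^T) v = 2^-1 * bf v S v + 2^-1 * bf v S v.
  by rewrite bfD !bfZ [bf v S^T v]bf_tr trmxK.
have h5 : bf (P *m x) (A *m E + B *m G)^T (- (P *m xp)) = - bf xp (P *m Ak) x.
  by rewrite bfNr bf_tr trmxK bf_mull bf_mulr sP -mulmxA hAcl.
have h6 : bf v F^T (- (P *m xp)) = - bf xp (P *m F) v.
  by rewrite bfNr bf_tr trmxK bf_mull sP.
have h7 : bf (- (P *m xp)) (A *m E + B *m G) (P *m x) = - bf xp (P *m Ak) x.
  by rewrite bfNl bf_mull bf_mulr sP -mulmxA hAcl.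
have h8 : bf (- (P *m xp)) F v = - bf xp (P *m F) v.
  by rewrite bfNl bf_mull sP.
have h9 : bf (- (P *m xp)) E (- (P *m xp)) = bf xp P xp.
  by rewrite bfNl bfNr opprK bf_mull bf_mulr sP hPE mul1mx.
have h10 : bf (P *m x) E (- (Gamma *m x)) = - bf x Gamma x.
  by rewrite bfNr bf_mull bf_mulr sP hPE mul1mx.
have h11 : bf (- (Gamma *m x)) E (P *m x) = - bf x Gamma x.
  by rewrite bfNl bf_mull bf_mulr sG -mulmxA hEP mulmx1.
have h12 : bf (- (Gamma *m x)) H (- (Gamma *m x)) = bf x Gamma x.
  by rewrite bfNl bfNr opprK bf_mull bf_mulr sG hGH mul1mx.
have h13 : bf xp P xp = bf xp (P *m Ak) x + bf xp (P *m F) v.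
  have -> : bf xp P xp = bf xp P (Ak *m x + F *m v) by [].
  by rewrite bfDr !bf_mulr.
have h14 : (v^T *m (C *m x + D *m v)) 0 0 = bf v C x + bf v S v.
  by rewrite /bf mulmxDr addE !mulmxA.
have := hM (col_mx (col_mx (col_mx (P *m x) v) (- (P *m xp))) (- (Gamma *m x))).
rewrite !qformE /lmi_mx /=.
rewrite !(bf_block, bf_colcol, bf_rowcol, bf0, addr0, add0r).
rewrite h1 h2 h3 h4 h5 h6 h7 h8 h9 h10 h11 h12 h14 h13.
lra.
Qed.
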